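(* Let $n\ge1$ be an integer and $\kappa\ge0$. Suppose each arc travel time function is separable, $t_a=t_a(v_a)$, and is a polynomial of degree $n$ with nonnegative coefficients. Define $$\zeta(\kappa,n)=\begin{cases}(1+\kappa)^{n+1}&\text{if }\kappa\ge(n+1)^{1/n}-1,\\[2pt] \Big(\frac1{1+\kappa}-\frac{n}{(n+1)^{(n+1)/n}}\Big)^{-1}&\text{if }0\le\kappa\le(n+1)^{1/n}-1.\end{cases}$$ Let $\mathbf f^\kappa$ be any $\kappa$-MSatUE, $\mathbf f^0$ a PRUE flow and $\mathbf f^*$ a system optimal flow. Then $$C(\mathbf f^* )\le C(\mathbf f^\kappa)\le\zeta(\kappa,n)\,C(\mathbf f^* )\le\zeta(\kappa,n)\,C(\mathbf f^0).$$ In particular, $\mathsf{PoSat}_\kappa(G,\mathbf Q,\mathbf t)\le\zeta(\kappa,n)$.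
   Context: Let $G=(\mathcal N,\mathcal A)$ be a finite directed graph and $\mathcal W$ a finite set of OD pairs; each $w$ has demand $Q_w>0$ (vector $\mathbf Q$) and a finite set $\mathcal P_w$ of paths from its origin to its destination; $\mathcal P=\bigcup_w\mathcal P_w$; $\delta^p_a=1$ if arc $a$ lies on path $p$, else $0$. Feasible path flows $\mathbf F=\{\mathbf f\ge0:\sum_{p\in\mathcal P_w}f_p=Q_w\ \forall w\}$, with induced arc flows $v_a=\sum_p\delta^p_af_p$. Path travel time $c_p(\mathbf f)=\sum_a\delta^p_at_a(\mathbf v)$; total system travel time $C(\mathbf f)=\sum_{p\in\mathcal P}c_p(\mathbf f)f_p=\sum_a t_a(\mathbf v)v_a$. A system optimal flow $\mathbf f^*$ minimizes $C$ over $\mathbf F$. A flow $\mathbf f$ is a perfectly rational user equilibrium (PRUE) if $f_p>0\implies c_p(\mathbf f)=\min_{p'\in\mathcal P_w}c_{p'}(\mathbf f)$ for all $w$, $p\in\mathcal P_w$; it is a $\kappa$-MSatUE if $f_p>0\implies c_p(\mathbf f)\le(1+\kappa)\min_{p'\in\mathcal P_w}c_{p'}(\mathbf f)$. The price of satisficing is $\mathsf{PoSat}_\kappa(G,\mathbf Q,\mathbf t)=\max_{\mathbf f^\kappa}C(\mathbf f^\kappa)/C(\mathbf f^0)$, the maximum over all $\kappa$-MSatUE flows $\mathbf f^\kappa$, with $\mathbf f^0$ a PRUE flow. *)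

(* Defs.v *)
From HB Require Import structures.
From mathcomp Require Import all_boot all_order all_algebra.
From mathcomp Require Import all_classical all_reals all_analysis.
Set Implicit Arguments. Unset Strict Implicit. Unset Printing Implicit Defensive.
Import Order.TTheory GRing.Theory Num.Theory.
Local Open Scope ring_scope.

Fixpoint walkb (N A : eqType) (tl hd : A -> N) (o d : N) (s : seq A) : bool :=
  if s is a :: s' then (tl a == o) && walkb tl hd (hd a) d s' else o == d.

Definition is_path (N A : eqType) (tl hd : A -> N) (o d : N) (s : seq A) : bool :=
  walkb tl hd o d s && uniq (o :: map hd s).

(* delta^p_a = 1 if arc a lies on path p (pa p = arcs of p), else 0 *)
Definition delta (A P : finType) (pa : P -> seq A) (p : P) (a : A) : nat :=
  (a \in pa p).

Definition arc_flow (R : realType) (A P : finType) (pa : P -> seq A)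
  (f : P -> R) (a : A) : R :=
  \sum_(p : P) (delta pa p a)%:R * f p.

Definition path_cost (R : realType) (A P : finType) (t : A -> {poly R})
  (pa : P -> seq A) (f : P -> R) (p : P) : R :=
  \sum_(a : A) (delta pa p a)%:R * (t a).[arc_flow pa f a].

Definition total_cost (R : realType) (A P : finType) (t : A -> {poly R})
  (pa : P -> seq A) (f : P -> R) : R :=
  \sum_(p : P) path_cost t pa f p * f p.

(* f in F: nonnegative and meets every OD demand; od p = the OD pair of path p *)
Definition feasible (R : realType) (W P : finType) (od : P -> W) (Q : W -> R)
  (f : P -> R) : Prop :=
  (forall p, 0 <= f p) /\ (forall w, \sum_(p : P | od p == w) f p = Q w).

Definition MSatUE (R : realType) (A W P : finType) (od : P -> W)
  (t : A -> {poly R}) (pa : P -> seq A) (kappa : R) (f : P -> R) : Prop :=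
  forall p, 0 < f p -> forall p', od p' = od p ->
    path_cost t pa f p <= (1 + kappa) * path_cost t pa f p'.

(* PRUE: f_p > 0 -> c_p = min_{p' in P_w} c_p' (p itself is in P_w) *)
Definition PRUE (R : realType) (A W P : finType) (od : P -> W)
  (t : A -> {poly R}) (pa : P -> seq A) (f : P -> R) : Prop :=
  forall p, 0 < f p -> forall p', od p' = od p ->
    path_cost t pa f p <= path_cost t pa f p'.

Definition system_optimal (R : realType) (A W P : finType) (od : P -> W)
  (Q : W -> R) (t : A -> {poly R}) (pa : P -> seq A) (f : P -> R) : Prop :=
  feasible od Q f /\
  (forall g, feasible od Q g -> total_cost t pa f <= total_cost t pa g).

Definition zeta (R : realType) (kappa : R) (n : nat) : R :=
  if (n.+1%:R `^ (n%:R)^-1 - 1 <= kappa)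
  then (1 + kappa) ^+ n.+1
  else ((1 + kappa)^-1 - n%:R / (n.+1%:R `^ (n.+1%:R / n%:R)))^-1.

(* Main.v *)
Require Import Defs.
From HB Require Import structures.
From mathcomp Require Import all_boot all_order all_algebra.
From mathcomp Require Import all_classical all_reals all_analysis.
From mathcomp Require Import ring lra.
Import Order.TTheory GRing.Theory Num.Theory.
Local Open Scope ring_scope.

Lemma amgm (R : realFieldType) (m : nat) (c s : R) : 0 <= c -> 0 <= s ->
  m.+1%:R * c * s ^+ m <= c ^+ m.+1 + m%:R * s ^+ m.+1.
Proof.
move=> c0 s0; elim: m => [|m IH]; first by rewrite expr0 expr1 mulr1 mul1r mul0r addr0.
have z0 : 0 <= s ^+ m by rewrite exprn_ge0.
have m0 : 0 <= m%:R :> R by rewrite ler0n.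
set z := s ^+ m in z0 IH.
have E1 : s ^+ m.+1 = s * z by rewrite exprS.
rewrite E1 in IH *.
have -> : s ^+ m.+2 = s * (s * z) by rewrite !exprS.
rewrite exprS. set C := c ^+ m.+1 in IH *.
have h1 := mulr_ge0 (mulr_ge0 (addr_ge0 m0 ler01) z0) (sqr_ge0 (c - s)).
have h2 := ler_wpM2l c0 IH.
rewrite -[m.+2]addn1 -[m.+1]addn1 !natrD in IH h2 *.
rewrite expr2 in h1.
lra.
Qed.

Lemma mono1 (R : realFieldType) (n k : nat) (c x y : R) : (k <= n)%N ->
  0 <= c -> n.+1%:R <= c ^+ n -> 0 <= x -> 0 <= y ->
  n.+1%:R * c * (x ^+ k * y) - n%:R * (x ^+ k * x) <= c ^+ n.+1 * (y ^+ k * y).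
Proof.
move=> kn c0 hP x0 y0.
have X0 : 0 <= x ^+ k by rewrite exprn_ge0.
have Y0 : 0 <= y ^+ k by rewrite exprn_ge0.
have P0 : 0 <= c ^+ n by rewrite exprn_ge0.
have n0 : 0 <= n%:R :> R by rewrite ler0n.
have RHS0 : 0 <= c ^+ n.+1 * (y ^+ k * y) by rewrite mulr_ge0 ?exprn_ge0 ?mulr_ge0.
have [xy|yx] := leP x y.
  have XY : x ^+ k <= y ^+ k by rewrite lerXn2r ?nnegrE.
  have a1 : x ^+ k * y <= y ^+ k * y := ler_wpM2r y0 XY.
  have a2 : n.+1%:R * c <= c ^+ n * c := ler_wpM2r c0 hP.
  have a4 := ler_pM (mulr_ge0 (ler0n _ _) c0) (mulr_ge0 X0 y0) a2 a1.
  have a3 : 0 <= n%:R * (x ^+ k * x) by rewrite mulr_ge0 ?mulr_ge0.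
  rewrite exprSr; lra.
set L := _ - _.
have [L0|L0] := leP L 0; first lra.
have [y00|ypos] := eqVneq y 0.
  move: L0; rewrite /L y00 mulr0 mulr0 sub0r oppr_gt0 => L0.
  have a3 : 0 <= n%:R * (x ^+ k * x) by rewrite mulr_ge0 ?mulr_ge0.
  lra.
have yp : 0 < y by rewrite lt0r ypos y0.
have Ep : 0 < y ^+ (n - k) by rewrite exprn_gt0.
rewrite -(ler_pM2l Ep).
have ED : y ^+ (n - k) <= x ^+ (n - k) by rewrite lerXn2r ?nnegrE // ltW.
apply: le_trans (ler_wpM2r (ltW L0) ED) _.
have am := @amgm _ n (c * y) x (mulr_ge0 c0 y0) x0.
have ex : x ^+ n = x ^+ (n - k) * x ^+ k by rewrite -exprD subnK.
have ey : y ^+ n = y ^+ (n - k) * y ^+ k by rewrite -exprD subnK.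
rewrite exprMn !exprS ex ey in am.
rewrite /L exprS. set D := x ^+ (n - k) in am *. set E := y ^+ (n - k) in am *.
set X := x ^+ k in am *. set Y := y ^+ k in am *. set C := c ^+ n in am *.
lra.
Qed.

Lemma mono2 (R : realFieldType) (n k : nat) (r x y : R) : (k <= n)%N ->
  0 < r -> r ^+ n = n.+1%:R -> 0 <= x -> 0 <= y ->
  n.+1%:R * r * (x ^+ k * y - y ^+ k * y) <= n%:R * (x ^+ k * x).
Proof.
move=> kn r0 hr x0 y0.
have X0 : 0 <= x ^+ k by rewrite exprn_ge0.
have Y0 : 0 <= y ^+ k by rewrite exprn_ge0.
have n0 : 0 <= n%:R :> R by rewrite ler0n.
have RHS0 : 0 <= n%:R * (x ^+ k * x) by rewrite mulr_ge0 ?mulr_ge0.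
have [xy|yx] := leP x y.
  have XY : x ^+ k <= y ^+ k by rewrite lerXn2r ?nnegrE.
  have a1 : x ^+ k * y <= y ^+ k * y := ler_wpM2r y0 XY.
  have a2 : 0 <= n.+1%:R * r by rewrite mulr_ge0 ?ler0n ?ltW.
  have := ler_wpM2l a2 a1. lra.
have xp : 0 < x by apply: le_lt_trans yx.
have Dp : 0 < x ^+ (n - k) by rewrite exprn_gt0.
rewrite -(ler_pM2l Dp).
have ED : y ^+ (n - k) <= x ^+ (n - k) by rewrite lerXn2r ?nnegrE // ltW.
have a1 := ler_wpM2r (mulr_ge0 Y0 y0) ED.
have am := @amgm _ n (r * y) x (mulr_ge0 (ltW r0) y0) x0.
have ex : x ^+ n = x ^+ (n - k) * x ^+ k by rewrite -exprD subnK.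
have ey : y ^+ n = y ^+ (n - k) * y ^+ k by rewrite -exprD subnK.
rewrite exprMn !exprS hr ex ey in am.
set D := x ^+ (n - k) in am a1 *. set E := y ^+ (n - k) in am a1 *.
set X := x ^+ k in am a1 *. set Y := y ^+ k in am a1 *.
have a2 : 0 <= n.+1%:R * r by rewrite mulr_ge0 ?ler0n ?ltW.
have a3 := ler_wpM2l a2 a1.
lra.
Qed.

Lemma poly1 (R : realFieldType) (n : nat) (T : {poly R}) (c x y : R) :
  (size T <= n.+1)%N -> (forall i, 0 <= T`_i) ->
  0 <= c -> n.+1%:R <= c ^+ n -> 0 <= x -> 0 <= y ->
  n.+1%:R * c * (T.[x] * y) - n%:R * (T.[x] * x) <= c ^+ n.+1 * (T.[y] * y).
Proof.
move=> hs hT c0 hP x0 y0.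
rewrite !(horner_coef_wide _ hs) !big_distrl /= !mulr_sumr -sumrB.
apply: ler_sum => i _.
have := ler_wpM2l (hT i) (@mono1 _ n i c x y (ltn_ord i) c0 hP x0 y0).
lra.
Qed.

Lemma poly2 (R : realFieldType) (n : nat) (T : {poly R}) (r x y : R) :
  (size T <= n.+1)%N -> (forall i, 0 <= T`_i) ->
  0 < r -> r ^+ n = n.+1%:R -> 0 <= x -> 0 <= y ->
  n.+1%:R * r * (T.[x] * y - T.[y] * y) <= n%:R * (T.[x] * x).
Proof.
move=> hs hT r0 hr x0 y0.
rewrite !(horner_coef_wide _ hs) !big_distrl /= -sumrB !mulr_sumr.
apply: ler_sum => i _.
have := ler_wpM2l (hT i) (@mono2 _ n i r x y (ltn_ord i) r0 hr x0 y0).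
lra.
Qed.


Lemma exch (R : realType) (A P : finType) (t : A -> {poly R}) (pa : P -> seq A)
  (g h : P -> R) :
  \sum_p path_cost t pa g p * h p =
  \sum_a (t a).[arc_flow pa g a] * arc_flow pa h a.
Proof.
rewrite /path_cost; under eq_bigr do rewrite big_distrl.
rewrite exchange_big; apply: eq_bigr => a _ /=.
rewrite /arc_flow mulr_sumr; apply: eq_bigr => p _ /=; ring.
Qed.

Lemma af_ge0 (R : realType) (A P : finType) (pa : P -> seq A) (f : P -> R) a :
  (forall p, 0 <= f p) -> 0 <= arc_flow pa f a.
Proof. by move=> h; apply: sumr_ge0 => p _; rewrite mulr_ge0 ?ler0n. Qed.

Lemma horner_ge0 (R : realFieldType) (T : {poly R}) x :
  (forall i, 0 <= T`_i) -> 0 <= x -> 0 <= T.[x].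
Proof.
move=> hT x0; rewrite horner_coef; apply: sumr_ge0 => i _.
by rewrite mulr_ge0 ?exprn_ge0.
Qed.

Lemma pc_ge0 (R : realType) (A P : finType) (t : A -> {poly R}) (pa : P -> seq A)
  (f : P -> R) p :
  (forall a i, 0 <= (t a)`_i) -> (forall p, 0 <= f p) -> 0 <= path_cost t pa f p.
Proof.
move=> ht hf; apply: sumr_ge0 => a _.
by rewrite mulr_ge0 ?ler0n // horner_ge0 // af_ge0.
Qed.

Lemma sat_bound (R : realType) (A W P : finType) (od : P -> W) (Q : W -> R)
  (t : A -> {poly R}) (pa : P -> seq A) (kappa : R) (fk fs : P -> R) :
  0 <= kappa -> (forall a i, 0 <= (t a)`_i) ->
  feasible od Q fk -> feasible od Q fs -> MSatUE od t pa kappa fk ->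
  total_cost t pa fk <= (1 + kappa) * \sum_p path_cost t pa fk p * fs p.
Proof.
move=> k0 ht [fk0 fkQ] [fs0 fsQ] hM.
set cost := path_cost t pa fk.
have cg0 : forall p, 0 <= cost p by move=> p; apply: pc_ge0.
set S := \sum_p cost p.
have S0 : 0 <= S by apply: sumr_ge0.
pose M w := \big[Order.min/S]_(p | od p == w) cost p.
have M1 : forall p, 0 < fk p -> cost p <= (1 + kappa) * M (od p).
  move=> p hp; rewrite /M; apply: (big_ind (fun m => cost p <= (1 + kappa) * m)).
  - have : cost p <= S by rewrite /S (bigD1 p) //= lerDl sumr_ge0.
    move=> h; apply: le_trans h _; rewrite ler_peMl //; lra.
  - by move=> a b ha hb; have [ab|ba] := leP a b.
  - by move=> p' /eqP e; apply: hM.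
have M2 : forall p, M (od p) <= cost p.
  by move=> p; rewrite /M (bigD1 p) //= ge_min lexx.
have part : forall f : P -> R, \sum_p M (od p) * f p =
    \sum_w M w * \sum_(p | od p == w) f p.
  move=> f; rewrite (partition_big od predT) //=; apply: eq_bigr => w _.
  by rewrite mulr_sumr; apply: eq_bigr => p /eqP <-.
have e1 : \sum_p M (od p) * fk p = \sum_p M (od p) * fs p.
  rewrite !part; apply: eq_bigr => w _; by rewrite fkQ fsQ.
apply: (@le_trans _ _ (\sum_p (1 + kappa) * M (od p) * fk p)).
  apply: ler_sum => p _; have [fp0|fpp] := eqVneq (fk p) 0.
    by rewrite fp0 !mulr0.
  have fpp' : 0 < fk p by rewrite lt0r fpp fk0.
  by apply: ler_wpM2r => //; apply: M1.
under eq_bigr do rewrite -mulrA.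
rewrite -mulr_sumr e1; apply: ler_wpM2l; first lra.
by apply: ler_sum => p _; apply: ler_wpM2r.
Qed.

Theorem lemma5 (R : realType)
  (Nd A W P : finType) (tl hd : A -> Nd)          (* graph: nodes, arcs *)
  (orig dest : W -> Nd) (Q : W -> R)              (* OD pairs, demands *)
  (od : P -> W) (pa : P -> seq A)                 (* paths and their OD pair *)
  (hQ : forall w, 0 < Q w)
  (hpath : forall p, is_path tl hd (orig (od p)) (dest (od p)) (pa p))
  (hdistinct : injective (fun p => (od p, pa p)))
  (n : nat) (hn : (1 <= n)%N) (kappa : R) (hkappa : 0 <= kappa)
  (t : A -> {poly R})
  (ht : forall a, (size (t a) <= n.+1)%N /\ (forall i, 0 <= (t a)`_i))
  (fk f0 fs : P -> R)
  (hfk : feasible od Q fk /\ MSatUE od t pa kappa fk)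
  (hf0 : feasible od Q f0 /\ PRUE od t pa f0)
  (hfs : system_optimal od Q t pa fs) :
  total_cost t pa fs <= total_cost t pa fk /\
  total_cost t pa fk <= zeta kappa n * total_cost t pa fs /\
  zeta kappa n * total_cost t pa fs <= zeta kappa n * total_cost t pa f0.
Proof.
case: hfk => fkF fkM; case: hf0 => f0F _; case: hfs => fsF fsOpt.
have hc : forall a i, 0 <= (t a)`_i by move=> a; case: (ht a).
have hs : forall a, (size (t a) <= n.+1)%N by move=> a; case: (ht a).
have fk0 : forall p, 0 <= fk p by case: fkF.
have fs0 : forall p, 0 <= fs p by case: fsF.
set c := 1 + kappa.
have c0 : 0 < c by rewrite /c; lra.
have n0 : 0 < n%:R :> R by rewrite ltr0n.
have en : n.+1%:R = n%:R + 1 :> R by rewrite natr1.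
set r := (n.+1%:R : R) `^ (n%:R : R)^-1.
have r0 : 0 < r by apply: powR_gt0; rewrite ltr0n.
have rn : r ^+ n = n.+1%:R.
  rewrite /r -powR_mulrn ?powR_ge0 // -powRrM mulVf ?powRr1 ?ler0n //.
  by rewrite lt0r_neq0.
have rn1 : n.+1%:R `^ (n.+1%:R / n%:R) = n.+1%:R * r :> R.
  have -> : n.+1%:R / n%:R = 1 + (n%:R)^-1 :> R.
    by rewrite en mulrDl divff ?lt0r_neq0 // mul1r.
  rewrite powRD ?powRr1 ?ler0n //.
  by rewrite pnatr_eq0 implybT.
set Ck := total_cost t pa fk.
set Cs := total_cost t pa fs.
set X := \sum_p path_cost t pa fk p * fs p.
have key : Ck <= c * X by exact: (@sat_bound R A W P od Q t pa kappa fk fs hkappa hc fkF fsF fkM).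
have Ck0 : 0 <= Ck.
  by apply: sumr_ge0 => p _; rewrite mulr_ge0 ?pc_ge0.
have Cs0 : 0 <= Cs.
  by apply: sumr_ge0 => p _; rewrite mulr_ge0 ?pc_ge0.
have eCk : Ck = \sum_a (t a).[arc_flow pa fk a] * arc_flow pa fk a by rewrite /Ck /total_cost exch.
have eCs : Cs = \sum_a (t a).[arc_flow pa fs a] * arc_flow pa fs a by rewrite /Cs /total_cost exch.
have eX : X = \sum_a (t a).[arc_flow pa fk a] * arc_flow pa fs a by rewrite /X exch.
have main : Ck <= zeta kappa n * Cs /\ 0 <= zeta kappa n.
  rewrite /zeta -/r rn1 -/c.
  case: ifP => hcase.
    have rc : r <= c by rewrite /c; lra.
    have hP : n.+1%:R <= c ^+ n by rewrite -rn; apply: lerXn2r; rewrite // nnegrE ltW.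
    have hsum : \sum_a (n.+1%:R * c * ((t a).[arc_flow pa fk a] * arc_flow pa fs a)
        - n%:R * ((t a).[arc_flow pa fk a] * arc_flow pa fk a))
        <= \sum_a c ^+ n.+1 * ((t a).[arc_flow pa fs a] * arc_flow pa fs a).
      by apply: ler_sum => a _; apply: poly1; [exact: hs|exact: hc|exact: ltW c0|exact: hP|exact: af_ge0|exact: af_ge0].
    rewrite sumrB -!mulr_sumr -eCk -eCs -eX in hsum.
    have := ler_wpM2l (ltW (ltr0Sn R n)) key.
    split; last by rewrite exprn_ge0 ?ltW.
    rewrite en in hsum *; nra.
  have cr : c < r by rewrite /c; move/negbT: hcase; rewrite -ltNge; lra.
  have hsum : \sum_a (n.+1%:R * r * ((t a).[arc_flow pa fk a] * arc_flow pa fs a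
        - (t a).[arc_flow pa fs a] * arc_flow pa fs a))
        <= \sum_a n%:R * ((t a).[arc_flow pa fk a] * arc_flow pa fk a).
    apply: ler_sum => a _; apply: poly2; [exact: hs|exact: hc|exact: r0|exact: rn|exact: af_ge0|exact: af_ge0].
  rewrite -!mulr_sumr sumrB -eCk -eCs -eX in hsum.
  set beta := n%:R / (n.+1%:R * r).
  have nr0 : 0 < n.+1%:R * r by rewrite mulr_gt0 ?ltr0Sn.
  have hb : X - Cs <= beta * Ck.
    rewrite -(ler_pM2l nr0).
    have -> : n.+1%:R * r * (beta * Ck) = n%:R * Ck.
      by rewrite /beta; field; rewrite ?lt0r_neq0.
    exact: hsum.
  have hk : c^-1 * Ck <= X by rewrite ler_pdivrMl.
  have d0 : 0 < c^-1 - beta.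
    have e1 : r^-1 - beta = (n.+1%:R * r)^-1.
      have n10 : n%:R + 1 != 0 :> R by rewrite -en lt0r_neq0 // ltr0Sn.
      rewrite /beta en; field; rewrite ?n10 ?lt0r_neq0 //=.
    have : r^-1 < c^-1 by rewrite ltf_pV2 ?posrE.
    have : 0 < (n.+1%:R * r)^-1 by rewrite invr_gt0.
    move=> h1 h2; have -> : c^-1 - beta = (c^-1 - r^-1) + (r^-1 - beta) by rewrite addrA subrK.
    by rewrite e1 addr_gt0 // subr_gt0.
  split; last by rewrite invr_ge0 ltW.
  rewrite -(ler_pM2l d0) mulrA mulfV ?lt0r_neq0 // mul1r.
  lra.
case: main => m1 m2.
split; first exact: fsOpt.
split; first exact: m1.
by apply: ler_wpM2l => //; apply: fsOpt.
Qed.
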